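(* Let $S\subset\mathbb{R}^d$ be a nonempty compact convex set with diameter $D:=\sup_{x,y\in S}\|x-y\|$, and let $f$ be differentiable on $S$ with $L$-Lipschitz gradient on $S$ (not necessarily convex). Let $G:=\sup_{x\in S}\|\nabla f(x)\|<\infty$, fix $C\ge\max\{LD^2,\,GD\}$ with $C>0$, and let $f^*:=\inf_{x\in S}f(x)$. Let $\delta\ge0$ and suppose that for every $x\in S$ a vector $g_\delta(x)\in\mathbb{R}^d$ is available with \[ \big|\langle \nabla f(x)-g_\delta(x),\,s-x\rangle\big|\le\delta\,\|\nabla f(x)\|\quad\text{for all } s\in S. \] Let $\mathcal G(x):=\max_{s\in S}\langle\nabla f(x),\,x-s\rangle$ and $\tilde{\mathcal G}(x):=\max_{s\in S}\langle g_\delta(x),\,x-s\rangle$. Given $x^0\in S$, define iterates for $k=0,1,2,\dots$ by choosing $s^k\in\arg\min_{s\in S}\langle g_\delta(x^k),\,s-x^k\rangle$, setting $\overline\alpha_k:=\big(\tilde{\mathcal G}(x^k)-\delta\|\nabla f(x^k)\|\big)_+/C$ with $(u)_+:=\max\{u,0\}$, and $x^{k+1}:=x^k+\overline\alpha_k(s^k-x^k)$. Suppose there exists $r>0$ such that $\mathrm{dist}(x^k,\partial S)\ge r$ for all $k$. Then $\mathcal G(x^k)\ge r\|\nabla f(x^k)\|$ for all $k$, and if additionally $\delta<r/2$, then for every $K\ge0$, \[ \min_{0\le k\le K}\mathcal G(x^k)\le\frac{1}{1-\frac{2\delta}{r}}\sqrt{\frac{2C\,(f(x^0)-f^* )}{K+1}}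 ; \] consequently $\min_{0\le k\le K}\mathcal G(x^k)=\mathcal O(1/\sqrt K)$ and $\liminf_{k\to\infty}\mathcal G(x^k)=0$.
   Context: $\|\cdot\|$ is the Euclidean norm, $\langle\cdot,\cdot\rangle$ the Euclidean inner product, $\partial S$ is the boundary of $S$ in $\mathbb{R}^d$ and $\mathrm{dist}$ the Euclidean distance. *)

(* Defs.v *)
From HB Require Import structures.
From mathcomp Require Import all_boot all_order all_algebra.
From mathcomp Require Import all_classical all_reals all_analysis.
Import Order.TTheory GRing.Theory Num.Theory.
Import numFieldNormedType.Exports.
Local Open Scope ring_scope.
Local Open Scope classical_set_scope.

Section Defs.
Context {R : realType} {d : nat}.
Implicit Types (u v x y : 'rV[R]_d) (S A : set 'rV[R]_d).

Definition dotv u v : R := \sum_(i < d) u 0 i * v 0 i.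
Definition enorm u : R := Num.sqrt (dotv u u).

Definition convexS S : Prop :=
  forall x y (t : R), S x -> S y -> 0 <= t <= 1 -> S (t *: x + (1 - t) *: y).

Definition boundary S : set 'rV[R]_d := closure S `\` S°.

Definition set_dist x A : R := inf [set enorm (x - y) | y in A].

Definition diam S : R := sup [set enorm (p.1 - p.2) | p in [set p | S p.1 /\ S p.2]].

(* Frank-Wolfe gap max_{s in S} <g, x - s> (a max, since S is compact) *)
Definition fw_gap S (g : 'rV[R]_d) x : R := sup [set dotv g (x - s) | s in S].
End Defs.

Definition min_upto {R : realType} (u : nat -> R) (K : nat) : R :=
  \big[Num.min/u 0%N]_(k < K.+1) u k.

(* Main.v *)
Require Import Defs.
From HB Require Import structures.
From mathcomp Require Import all_boot all_order all_algebra.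
From mathcomp Require Import all_classical all_reals all_analysis.
From mathcomp Require Import ring lra.
Import Order.TTheory GRing.Theory Num.Theory.
Import numFieldNormedType.Exports.
Local Open Scope ring_scope.
Local Open Scope classical_set_scope.



Section Dot.
Context {R : realType} {d : nat}.
Implicit Types (u v w x y : 'rV[R]_d).

Lemma dotvC u v : dotv u v = dotv v u.
Proof. by apply: eq_bigr => i _; rewrite mulrC. Qed.

Lemma dotvDl u v w : dotv (u + v) w = dotv u w + dotv v w.
Proof. by rewrite /dotv -big_split; apply: eq_bigr => i _; rewrite mxE mulrDl. Qed.

Lemma dotvZl a u v : dotv (a *: u) v = a * dotv u v.
Proof. by rewrite /dotv mulr_sumr; apply: eq_bigr => i _; rewrite mxE mulrA. Qed.

Lemma dotvNl u v : dotv (- u) v = - dotv u v.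
Proof. by rewrite -scaleN1r dotvZl mulN1r. Qed.

Lemma dotvBl u v w : dotv (u - v) w = dotv u w - dotv v w.
Proof. by rewrite dotvDl dotvNl. Qed.

Lemma dotvDr u v w : dotv w (u + v) = dotv w u + dotv w v.
Proof. by rewrite !(dotvC w) dotvDl. Qed.

Lemma dotvZr a u v : dotv v (a *: u) = a * dotv v u.
Proof. by rewrite !(dotvC v) dotvZl. Qed.

Lemma dotvNr u v : dotv v (- u) = - dotv v u.
Proof. by rewrite !(dotvC v) dotvNl. Qed.

Lemma dotvBr u v w : dotv w (u - v) = dotv w u - dotv w v.
Proof. by rewrite dotvDr dotvNr. Qed.

Lemma dotv0l u : dotv 0 u = 0.
Proof. by rewrite /dotv big1 // => i _; rewrite mxE mul0r. Qed.

Lemma dotvv_ge0 u : 0 <= dotv u u.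
Proof. by rewrite /dotv sumr_ge0 // => i _; rewrite -expr2 sqr_ge0. Qed.

Lemma dotvv0 u : dotv u u = 0 -> u = 0.
Proof.
move=> /eqP; rewrite /dotv psumr_eq0; last by move=> i _; rewrite -expr2 sqr_ge0.
move=> /allP H; apply/rowP => i; rewrite mxE.
have := H i (mem_index_enum _); rewrite -expr2 sqrf_eq0 => /eqP.
by [].
Qed.

Lemma enorm_ge0 u : 0 <= enorm u.
Proof. exact: sqrtr_ge0. Qed.

Lemma enorm_sq u : enorm u ^+ 2 = dotv u u.
Proof. by rewrite sqr_sqrtr // dotvv_ge0. Qed.

Lemma enormZ a u : enorm (a *: u) = `|a| * enorm u.
Proof.
by rewrite /enorm dotvZl dotvZr mulrA -expr2 sqrtrM ?sqr_ge0 // sqrtr_sqr.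
Qed.

Lemma enormN u : enorm (- u) = enorm u.
Proof. by rewrite -scaleN1r enormZ normrN1 mul1r. Qed.

Lemma enorm_sub u v : enorm (u - v) = enorm (v - u).
Proof. by rewrite -enormN opprB. Qed.

Lemma enorm0 : enorm (0 : 'rV[R]_d) = 0.
Proof. by rewrite /enorm dotv0l sqrtr0. Qed.

Lemma enorm_eq0 u : enorm u = 0 -> u = 0.
Proof. by move=> h; apply: dotvv0; rewrite -enorm_sq h expr0n. Qed.

Lemma CS u v : dotv u v <= enorm u * enorm v.
Proof.
have [a0|a0] := eqVneq (enorm u) 0.
  by rewrite (enorm_eq0 _ a0) dotv0l enorm0 mul0r.
have [b0|b0] := eqVneq (enorm v) 0.
  by rewrite (enorm_eq0 _ b0) dotvC dotv0l enorm0 mulr0.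
set a := enorm u; set b := enorm v.
have ha : 0 < a by rewrite lt_def a0 enorm_ge0.
have hb : 0 < b by rewrite lt_def b0 enorm_ge0.
have H := dotvv_ge0 (b *: u - a *: v).
rewrite !(dotvBl, dotvBr, dotvZl, dotvZr) -!enorm_sq -/a -/b (dotvC v u) in H.
have : a * b * dotv u v <= a * b * (a * b) by nra.
by rewrite ler_pM2l ?mulr_gt0.
Qed.

Lemma CSabs u v : `|dotv u v| <= enorm u * enorm v.
Proof.
rewrite ler_norml CS andbT lerNl -dotvNl.
by apply: le_trans (CS _ _) _; rewrite enormN.
Qed.

Lemma enormD u v : enorm (u + v) <= enorm u + enorm v.
Proof.
rewrite -(ler_pXn2r (_ : 0 < 2)%N) ?nnegrE ?addr_ge0 ?enorm_ge0 //.
rewrite enorm_sq dotvDl !dotvDr -!enorm_sq (dotvC v u).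
have := CS u v; nra.
Qed.

End Dot.



Section Sup.
Context {R : realType} {T : Type}.

Lemma sup_img_ub (A : set T) (h : T -> R) B x :
  (forall y, A y -> h y <= B) -> A x -> h x <= sup [set h y | y in A].
Proof.
move=> hB Ax; apply: ub_le_sup; last by exists x.
by exists B => _ [y Ay <-]; exact: hB.
Qed.

Lemma sup_img_le (A : set T) (h : T -> R) B :
  A !=set0 -> (forall y, A y -> h y <= B) -> sup [set h y | y in A] <= B.
Proof.
move=> [x Ax] hB; apply: ge_sup; first by exists (h x), x.
by move=> _ [y Ay <-]; exact: hB.
Qed.

Lemma inf_img_lb (A : set T) (h : T -> R) B x :
  (forall y, A y -> B <= h y) -> A x -> inf [set h y | y in A] <= h x.
Proof.
move=> hB Ax; apply: ge_inf; last by exists x.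
by exists B => _ [y Ay <-]; exact: hB.
Qed.
End Sup.

Section Bnd.
Context {R : realType} {d : nat}.
Implicit Types (u v : 'rV[R]_d).

Lemma entry_le u i : `|u 0 i| <= `|u|.
Proof.
have /mapP[j Hj ->] : `|u 0 i| \in [seq `|u x.1 x.2| | x : 'I_1 * 'I_d].
  by apply/mapP; exists (ord0, i) => //=; rewrite mem_enum.
by rewrite [leRHS]/Num.norm /= mx_normrE; apply/bigmax_geP; right => /=; exists j.
Qed.

Lemma enorm_le_norm u : enorm u <= Num.sqrt d%:R * `|u|.
Proof.
rewrite -[`|u|]ger0_norm // -sqrtr_sqr -sqrtrM ?ler0n // ler_sqrt; last first.
  by rewrite mulr_ge0 ?sqr_ge0.
rewrite /dotv -[d in d%:R]card_ord -sumr_const.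
rewrite mulr_suml; apply: ler_sum => i _; by rewrite mul1r -expr2 -real_normK ?num_real // lerXn2r ?nnegrE // entry_le.
Qed.

Lemma compact_enorm_bnd (S : set 'rV[R]_d) :
  compact S -> exists B, 0 <= B /\ forall x, S x -> enorm x <= B.
Proof.
move=> /compact_bounded [M [Mreal H]].
have /H hM : M < `|M| + 1 by rewrite (le_lt_trans (real_ler_norm Mreal)) // ltrDl.
exists (Num.sqrt d%:R * (`|M| + 1)); split; first by rewrite mulr_ge0 // addr_ge0.
move=> x Sx; apply: (le_trans (enorm_le_norm x)).
by rewrite ler_wpM2l // hM.
Qed.
End Bnd.



Section Deriv.
Context {R : realType} {d : nat}.
Implicit Types (u v x y : 'rV[R]_d).

Lemma dir_deriv (f : 'rV[R]_d -> R) x v t :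
  derivable f (x + t *: v) v ->
  is_derive t 1 (fun s : R => f (x + s *: v)) ('D_v f (x + t *: v)).
Proof.
have E : (fun h : R => h^-1 *: (((fun s : R => f (x + s *: v)) \o shift t) (h *: 1)
     - f (x + t *: v))) =
  (fun h : R => h^-1 *: ((f \o shift (x + t *: v)) (h *: v) - f (x + t *: v))).
  apply: funext => h /=; rewrite /shift; congr (_ *: (f _ - _)).
  by rewrite [h%:A]mulr1 scalerDl addrCA.
move=> df; split; first by rewrite /derivable E.
by rewrite /derive E.
Qed.

Lemma is_derive_lin (c s : R) : is_derive s 1 (fun t : R => t * c) c.
Proof.
have h := @is_deriveM R R id (cst c) s 1 1 0 (is_derive_id _ _) (is_derive_cst _ _ _).
by rewrite scaler0 add0r [c%:A]mulr1 in h.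
Qed.

Lemma is_derive_sq (c s : R) : is_derive s 1 (fun t : R => c * t ^+ 2) (c * (2 * s)).
Proof.
have h1 := @is_deriveX R R id 2 s 1 1 (is_derive_id _ _).
have h := @is_deriveM R R (cst c) (id ^+ 2) s 1 0 _ (is_derive_cst _ _ _) h1.
move: h; rewrite scaler0 addr0 [_ *: 1]mulr1 expr1 /= => h.
exact: h.
Qed.
End Deriv.

Section Descent.
Context {R : realType} {d : nat}.
Variables (S : set 'rV[R]_d) (f : 'rV[R]_d -> R) (gradf : 'rV[R]_d -> 'rV[R]_d) (L : R).
Hypotheses (cvx : convexS S)
  (hdf : forall x, S x -> differentiable f x /\ forall v, 'd f x v = dotv (gradf x) v)
  (hL : 0 <= L)
  (Lip : forall x y, S x -> S y -> enorm (gradf x - gradf y) <= L * enorm (x - y)).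

Lemma seg_in {x v t} : S x -> S (x + v) -> 0 <= t <= 1 -> S (x + t *: v).
Proof.
move=> Sx Sxv ht; have := cvx _ _ _ Sxv Sx ht.
suff -> : t *: (x + v) + (1 - t) *: x = x + t *: v by [].
by rewrite scalerDr scalerBl scale1r addrAC [t *: x + _]addrC subrK.
Qed.

Lemma descent x v a : S x -> S (x + v) -> 0 <= a <= 1 ->
  f (x + a *: v) <= f x + a * dotv (gradf x) v + L * enorm v ^+ 2 / 2 * a ^+ 2.
Proof.
move=> Sx Sxv /andP[a0 a1].
set c0 := dotv (gradf x) v; set k := L * enorm v ^+ 2 / 2.
pose psi := fun s : R => f (x + s *: v) - s * c0 - k * s ^+ 2.
pose dpsi := fun s : R => dotv (gradf (x + s *: v)) v - c0 - k * (2 * s).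
have Hd (s : R) : 0 <= s <= 1 -> is_derive s 1 psi (dpsi s).
  move=> hs; have Ss := seg_in Sx Sxv hs; have [df dfE] := hdf _ Ss.
  have h1 := dir_deriv f x v s (diff_derivable (v:=v) df).
  rewrite deriveE // dfE in h1.
  exact: (is_deriveB (is_deriveB h1 (is_derive_lin c0 s)) (is_derive_sq k s)).
have [->|an0] := eqVneq a 0.
  by rewrite scale0r addr0 mul0r expr0n /= mulr0 !addr0.
have a0' : 0 < a by rewrite lt_def an0 a0.
have cont : {within `[0, a], continuous psi}.
  apply: derivable_within_continuous => s; rewrite in_itv /= => /andP[s0 s1].
  have hs : 0 <= s <= 1 by rewrite s0 (le_trans s1 a1).
  by case: (Hd s hs).
have hD : forall s : R, s \in `]0, a[%R -> is_derive s 1 psi (dpsi s).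
  move=> s /[!in_itv] /= /andP[s0 s1]; apply: Hd.
  by rewrite ltW //= ltW // (lt_le_trans s1 a1).
have [c] := MVT a0' hD cont.
rewrite in_itv /= => /andP[c0p c1].
have Sc : S (x + c *: v) by apply: seg_in => //; rewrite !ltW // (lt_le_trans c1 a1).
have dle : dpsi c <= 0.
  rewrite /dpsi /c0 -dotvBl.
  have := CS (gradf (x + c *: v) - gradf x) v.
  have := Lip _ _ Sc Sx; rewrite addrAC subrr add0r enormZ (ger0_norm (ltW c0p)).
  move=> h1 h2; have h3 := enorm_ge0 v.
  rewrite /k; nra.
rewrite /psi /= scale0r addr0 mul0r expr0n /= mulr0 !subr0 => E.
have : dpsi c * a <= 0 by rewrite mulr_le0_ge0 // ltW.
lra.
Qed.
End Descent.



Section Ball.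
Context {R : realType} {d : nat}.
Implicit Types (u v x y : 'rV[R]_d).

Lemma nbhs_rV (z : 'rV[R]_d) (B : set 'rV[R]_d) :
  nbhs z B -> exists2 e : R, 0 < e & forall w, `|z - w| < e -> B w.
Proof.
move=> /nbhs_ballP [e e0 he]; exists e => // w hw; apply: he.
by rewrite -ball_normE /ball_ /=.
Qed.

Lemma ball_in (S : set 'rV[R]_d) x y r :
  S x -> r <= set_dist x (boundary S) -> enorm (y - x) < r -> S y.
Proof.
move=> Sx hr hy; apply: contrapT => nSy.
set v := y - x.
pose A := [set t : R | 0 <= t <= 1 /\ S (x + t *: v)].
have A0 : A 0 by split; [rewrite lexx ler01 | rewrite scale0r addr0].
have Aub : has_ubound A by exists 1 => t [/andP[_ ]].
have AT : A !=set0 by exists 0.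
set T := sup A.
have T0 : 0 <= T by apply: ub_le_sup.
have T1 : T <= 1 by apply: ge_sup => // t [/andP[_ ]].
have tT t : A t -> t <= T by move=> At; apply: ub_le_sup.
have nv0 : 0 < `|v| + 1 by rewrite ltr_pwDr.
set z := x + T *: v.
have dist t : `|z - (x + t *: v)| = `|T - t| * `|v|.
  by rewrite /z opprD addrACA subrr add0r -scalerBl normrZ.
have zcl : closure S z.
  move=> B /nbhs_rV [e e0 he].
  have eta0 : 0 < e / (`|v| + 1) by rewrite divr_gt0.
  have [t At ht] := sup_adherent eta0 (conj AT Aub).
  exists (x + t *: v); split; first by case: At.
  apply: he; rewrite dist ger0_norm ?subr_ge0 ?tT //.
  apply: (@le_lt_trans _ _ (e / (`|v| + 1) * `|v|)).
    by rewrite ler_wpM2r // lerBlDl -lerBlDr ltW.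
  rewrite mulrAC ltr_pdivrMr // ltr_pM2l //; lra.
have zni : ~ (S°) z.
  move=> /nbhs_rV [e e0 he].
  have [T1'|T1'] := eqVneq T 1.
    by apply: nSy; have := he z; rewrite /z T1' scale1r subrr normr0 /v addrC subrK; apply.
  have Tlt1 : T < 1 by rewrite lt_def eq_sym T1' T1.
  have eta0 : 0 < e / (`|v| + 1) by rewrite divr_gt0.
  set t' := Num.min 1 (T + e / (`|v| + 1)).
  have Tt' : T < t' by rewrite lt_min Tlt1 ltrDl eta0.
  have : A t'.
    split; first by rewrite (le_trans T0 (ltW Tt')) /t' ge_min lexx.
    apply: he; rewrite dist distrC ger0_norm ?subr_ge0 ?ltW //.
    apply: (@le_lt_trans _ _ (e / (`|v| + 1) * `|v|)).
      by rewrite ler_wpM2r // lerBlDl /t' ge_min; apply/orP; right; rewrite addrC.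
    rewrite mulrAC ltr_pdivrMr // ltr_pM2l //; lra.
  by move=> /tT; rewrite leNgt Tt'.
have : set_dist x (boundary S) <= enorm (x - z).
  by apply: (@inf_img_lb _ _ _ (fun w => enorm (x - w)) 0) => // w _; exact: enorm_ge0.
rewrite /z opprD addrA subrr add0r enormN enormZ ger0_norm //.
have : T * enorm v <= enorm v by rewrite ler_piMl ?enorm_ge0.
rewrite /v in hy *; lra.
Qed.
End Ball.

Section Gap.
Context {R : realType} {d : nat}.

Lemma dotv0r (u : 'rV[R]_d) : dotv u 0 = 0.
Proof. by rewrite dotvC dotv0l. Qed.

Lemma gap_ge0 (S : set 'rV[R]_d) x gr B : S x ->
  (forall s, S s -> dotv gr (x - s) <= B) -> 0 <= fw_gap S gr x.
Proof.
move=> Sx hB; have := @sup_img_ub _ _ S (fun s => dotv gr (x - s)) B x hB Sx.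
by rewrite subrr dotv0r.
Qed.

Lemma gap_ge (S : set 'rV[R]_d) x gr r B : S x -> 0 < r ->
  r <= set_dist x (boundary S) ->
  (forall s, S s -> dotv gr (x - s) <= B) -> r * enorm gr <= fw_gap S gr x.
Proof.
move=> Sx r0 hr hB.
have G0 := gap_ge0 _ _ _ _ Sx hB.
have [n0|n0] := eqVneq (enorm gr) 0; first by rewrite n0 mulr0.
set n := enorm gr in n0 *.
have npos : 0 < n by rewrite lt_def n0 enorm_ge0.
set G := fw_gap S gr x in G0 *.
have key t : 0 < t -> t < r -> t * n <= G.
  move=> t0 tr.
  pose y := x - (t / n) *: gr.
  have Sy : S y.
    apply: (ball_in _ _ _ _ Sx hr).
    rewrite /y addrAC subrr add0r enormN enormZ ger0_norm ?divr_ge0 ?ltW //.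
    by rewrite divfK.
  have := @sup_img_ub _ _ S (fun s => dotv gr (x - s)) B y hB Sy.
  rewrite /y opprB addrC subrK dotvZr -enorm_sq -/n.
  by rewrite expr2 mulrA divfK.
rewrite leNgt; apply/negP => hlt.
have t0 : 0 < (G + r * n) / (2 * n).
  by rewrite divr_gt0 ?mulr_gt0 // ltr_pwDr // mulr_gt0.
have tr : (G + r * n) / (2 * n) < r.
  by rewrite ltr_pdivrMr ?mulr_gt0 //; lra.
have := key _ t0 tr.
rewrite mulrC mulrA mulrC invfM mulrA divfK //; lra.
Qed.
End Gap.



Section MinUpto.
Context {R : realType}.

Lemma big_min_le (x0 : R) n (F : 'I_n -> R) j :
  \big[Num.min/x0]_(i < n) F i <= F j.
Proof.
elim: n F j => [|n IH] F j; first by case: j.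
rewrite big_ord_recl ge_min.
by case: (unliftP ord0 j) => [j'|] ->; [rewrite (IH _ j') orbT | rewrite lexx].
Qed.

Lemma min_upto_le (u : nat -> R) K k : (k <= K)%N -> min_upto u K <= u k.
Proof.
rewrite -ltnS => kK.
exact: (big_min_le (u 0%N) K.+1 (fun i : 'I_K.+1 => u i) (Ordinal kK)).
Qed.

Lemma min_upto_ge0 (u : nat -> R) K : (forall k, 0 <= u k) -> 0 <= min_upto u K.
Proof.
move=> h; rewrite /min_upto; apply: (big_ind (fun x => 0 <= x)) => //.
by move=> x y x0 y0; rewrite le_min x0 y0.
Qed.
End MinUpto.

Theorem corollary1 (R : realType) (d : nat) (S : set 'rV[R]_d)
  (f : 'rV[R]_d -> R) (gradf g : 'rV[R]_d -> 'rV[R]_d)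
  (L C delta r : R) (xs ss : nat -> 'rV[R]_d) :
  S !=set0 -> compact S -> convexS S ->
  (forall x, S x -> differentiable f x /\ forall v, 'd f x v = dotv (gradf x) v) ->
  0 <= L ->
  (forall x y, S x -> S y -> enorm (gradf x - gradf y) <= L * enorm (x - y)) ->
  L * diam S ^+ 2 <= C ->
  sup [set enorm (gradf x) | x in S] * diam S <= C ->
  0 < C ->
  0 <= delta ->
  (forall x s, S x -> S s ->
     `| dotv (gradf x - g x) (s - x) | <= delta * enorm (gradf x)) ->
  S (xs 0%N) ->
  (forall k, S (ss k) /\
     forall s, S s -> dotv (g (xs k)) (ss k - xs k) <= dotv (g (xs k)) (s - xs k)) ->
  (forall k, xs k.+1 = xs k +
     (Num.max (fw_gap S (g (xs k)) (xs k) - delta * enorm (gradf (xs k))) 0 / C)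
       *: (ss k - xs k)) ->
  0 < r ->
  (forall k, r <= set_dist (xs k) (boundary S)) ->
  (forall k, r * enorm (gradf (xs k)) <= fw_gap S (gradf (xs k)) (xs k)) /\
  (delta < r / 2 ->
     (forall K : nat,
        min_upto (fun k => fw_gap S (gradf (xs k)) (xs k)) K <=
          (1 - 2 * delta / r)^-1 *
          Num.sqrt (2 * C * (f (xs 0%N) - inf [set f x | x in S]) / K.+1%:R)) /\
     (exists M : R, forall K : nat, (0 < K)%N ->
        min_upto (fun k => fw_gap S (gradf (xs k)) (xs k)) K <= M / Num.sqrt K%:R) /\
     limn_einf (fun k => (fw_gap S (gradf (xs k)) (xs k))%:E) = 0%E).
Proof.
move=> Sne Scomp cvx hdf hL Lip hLC hGC C0 dl0 hg Sx0 hss hxs r0 hr.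
have [B [B0 hB]] := compact_enorm_bnd S Scomp.
have hB2 x s : S x -> S s -> enorm (x - s) <= B + B.
  move=> Sx Ss; apply: le_trans (enormD _ _) _; rewrite enormN.
  exact: lerD (hB _ Sx) (hB _ Ss).
have hD x s : S x -> S s -> enorm (x - s) <= diam S.
  move=> Sx Ss.
  exact: (@sup_img_ub _ _ [set p | S p.1 /\ S p.2] (fun p => enorm (p.1 - p.2))
    (B + B) (x, s) (fun p hp => hB2 _ _ hp.1 hp.2) (conj Sx Ss)).
have [x0 Sx0'] := Sne.
have D0 : 0 <= diam S by have := hD _ _ Sx0' Sx0'; rewrite subrr enorm0.
have hGs x : S x -> enorm (gradf x) <= sup [set enorm (gradf x) | x in S].
  move=> Sx; apply: (@sup_img_ub _ _ S (fun x => enorm (gradf x))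
    (enorm (gradf x0) + L * (B + B))) => // y Sy.
  have -> : gradf y = gradf x0 + (gradf y - gradf x0) by rewrite addrC subrK.
  apply: le_trans (enormD _ _) _; rewrite lerD2l.
  by apply: le_trans (Lip _ _ Sy Sx0') _; rewrite ler_wpM2l // hB2.
have hgap gr x s : S x -> S s -> dotv gr (x - s) <= enorm gr * diam S.
  by move=> Sx Ss; apply: le_trans (CS _ _) _; rewrite ler_wpM2l ?enorm_ge0 // hD.
have hsupub gr x s : S x -> S s -> dotv gr (x - s) <= fw_gap S gr x.
  move=> Sx Ss.
  exact: (@sup_img_ub _ _ S (fun s => dotv gr (x - s)) (enorm gr * diam S) s
    (fun y Sy => hgap gr x y Sx Sy) Ss).
have F1 x : S x ->
    fw_gap S (gradf x) x <= fw_gap S (g x) x + delta * enorm (gradf x).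
  move=> Sx; rewrite {1}/fw_gap; apply: sup_img_le => // s Ss.
  have -> : dotv (gradf x) (x - s) =
      dotv (g x) (x - s) + dotv (gradf x - g x) (x - s).
    by rewrite dotvBl [RHS]addrC subrK.
  apply: lerD; first exact: hsupub.
  apply: le_trans (ler_norm _) _.
  by rewrite -[x - s]opprB dotvNr normrN; exact: hg.
have F2 k : S (xs k) ->
    fw_gap S (g (xs k)) (xs k) = dotv (g (xs k)) (xs k - ss k).
  move=> Sx; have [Ss hmin] := hss k.
  apply/le_anti/andP; split; last exact: hsupub.
  rewrite /fw_gap; apply: sup_img_le => // s Ss'.
  rewrite -(opprB (ss k)) -(opprB s) !dotvNr lerN2; exact: hmin.
have F3 k : S (xs k) -> dotv (gradf (xs k)) (ss k - xs k) <=
    - fw_gap S (g (xs k)) (xs k) + delta * enorm (gradf (xs k)).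
  move=> Sx; rewrite F2 // -dotvNr opprB.
  have -> : dotv (gradf (xs k)) (ss k - xs k) = dotv (g (xs k)) (ss k - xs k)
      + dotv (gradf (xs k) - g (xs k)) (ss k - xs k).
    by rewrite dotvBl [RHS]addrC subrK.
  apply: lerD => //; exact: le_trans (ler_norm _) (hg _ _ Sx (hss k).1).
have F4 k : S (xs k) ->
    fw_gap S (g (xs k)) (xs k) - delta * enorm (gradf (xs k)) <= C.
  move=> Sx; have := F3 k Sx.
  have := hgap (gradf (xs k)) _ _ Sx (hss k).1.
  rewrite -(opprB (ss k)) dotvNr.
  have := hGs _ Sx => h1 h2 h3.
  have : enorm (gradf (xs k)) * diam S <=
    sup [set enorm (gradf x) | x in S] * diam S by rewrite ler_wpM2r.
  lra.
pose a k := Num.max (fw_gap S (g (xs k)) (xs k) - delta * enorm (gradf (xs k))) 0.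
have a0 k : 0 <= a k by rewrite le_max lexx orbT.
have aC k : S (xs k) -> a k <= C by move=> Sx; rewrite ge_max (F4 k Sx) ltW.
have ha1 k : S (xs k) -> 0 <= a k / C <= 1.
  move=> Sx; rewrite divr_ge0 ?(ltW C0) //= ler_pdivrMr // mul1r; exact: aC.
have Sxs k : S (xs k).
  elim: k => [//|k IH]; rewrite hxs.
  apply: (seg_in S cvx IH _ (ha1 k IH)).
  by rewrite addrC subrK; exact: (hss k).1.
have P1 k : r * enorm (gradf (xs k)) <= fw_gap S (gradf (xs k)) (xs k).
  exact: (gap_ge S (xs k) (gradf (xs k)) r (enorm (gradf (xs k)) * diam S)
    (Sxs k) r0 (hr k) (fun s Ss => hgap _ _ s (Sxs k) Ss)).
split; first exact: P1.
move=> hdr.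
pose G k := fw_gap S (gradf (xs k)) (xs k).
have G0 k : 0 <= G k.
  exact: (gap_ge0 S (xs k) (gradf (xs k)) _ (Sxs k) (fun s Ss => hgap _ _ s (Sxs k) Ss)).
pose c := 1 - 2 * delta / r.
have c0 : 0 < c by rewrite /c subr_gt0 ltr_pdivrMr // mul1r; lra.
have F5 k : (c * G k) ^+ 2 <= 2 * C * (f (xs k) - f (xs k.+1)).
  have Sx := Sxs k; have [Ss _] := hss k.
  have hdes := descent S f gradf L cvx hdf Lip (xs k) (ss k - xs k) (a k / C) Sx
    (ltac:(by rewrite addrC subrK)) (ha1 k Sx).
  rewrite -hxs in hdes.
  have hdot := F3 k Sx.
  have hF1 := F1 _ Sx.
  have hP1 := P1 k.
  have hv : enorm (ss k - xs k) <= diam S := hD _ _ Ss Sx.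
  have hLv : L * enorm (ss k - xs k) ^+ 2 <= C.
    apply: le_trans hLC; rewrite ler_wpM2l // lerXn2r ?nnegrE ?enorm_ge0 //.
  move: hdes hdot hF1 hP1 hLv.
  rewrite /G /a.
  set Gt := fw_gap S (g (xs k)) (xs k).
  set nf := enorm (gradf (xs k)).
  set Gk := fw_gap S (gradf (xs k)) (xs k).
  set dt := dotv (gradf (xs k)) (ss k - xs k).
  set Lv := L * enorm (ss k - xs k) ^+ 2.
  set am := Num.max (Gt - delta * nf) 0.
  move=> hdes hdot hF1 hP1 hLv.
  have am0 : 0 <= am by rewrite le_max lexx orbT.
  have amu : Gt - delta * nf <= am by rewrite le_max lexx.
  have hau : am * (Gt - delta * nf) = am ^+ 2.
    rewrite /am; have [h|h] := leP 0 (Gt - delta * nf).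
      by rewrite expr2.
    by rewrite mul0r expr2 mul0r.
  have hcG : c * Gk <= am.
    have E : c * Gk * r = r * Gk - 2 * delta * Gk.
      by rewrite /c mulrBl mul1r mulrBl; field; rewrite gt_eqF.
    rewrite -(ler_pM2r r0) E.
    have : delta * (r * nf) <= delta * Gk by rewrite ler_wpM2l.
    nra.
  have cG0 : 0 <= c * Gk := mulr_ge0 (ltW c0) (G0 k).
  have h1 : am / C * dt <= am / C * (- Gt + delta * nf).
    by rewrite ler_wpM2l // divr_ge0 // ltW.
  have h2 : am / C * (- Gt + delta * nf) = - (am ^+ 2 / C).
    by rewrite -hau; field; rewrite gt_eqF.
  have h3 : Lv / 2 * (am / C) ^+ 2 <= C / 2 * (am / C) ^+ 2.
    by rewrite ler_wpM2r ?sqr_ge0 // ler_pM2r.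
  have h4 : C / 2 * (am / C) ^+ 2 = am ^+ 2 / C / 2.
    by field; rewrite gt_eqF.
  have h5 : am ^+ 2 / C * C = am ^+ 2 by rewrite divfK // gt_eqF.
  have hsq : (c * Gk) ^+ 2 <= am ^+ 2 by rewrite lerXn2r ?nnegrE.
  have hdes' : f (xs k.+1) <= f (xs k) - am ^+ 2 / C / 2.
    move: hdes; rewrite /Lv.
    have -> : L * enorm (ss k - xs k) ^+ 2 / 2 * (am / C) ^+ 2 =
      Lv / 2 * (am / C) ^+ 2 by rewrite /Lv.
    lra.
  set q := am ^+ 2 / C in h5 hdes'.
  nra.
have [m hm] : exists m, forall x, S x -> m <= f x.
  have fc : {within S, continuous f}.
    apply: continuous_in_subspaceT => x /[!inE] Sx.
    exact: differentiable_continuous (hdf x Sx).1.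
  have /compact_bounded [M [Mreal HM]] := continuous_compact fc Scomp.
  have /HM hM : M < `|M| + 1.
    by rewrite (le_lt_trans (real_ler_norm Mreal)) // ltrDl.
  exists (- (`|M| + 1)) => x Sx.
  have := hM (f x) (ex_intro2 _ _ x Sx erefl).
  move=> /= h; have h' : `|f x| <= `|M| + 1 := h; move: h'; by rewrite ler_norml => /andP[].
have hfs x : S x -> inf [set f x | x in S] <= f x.
  by move=> Sx; apply: (@inf_img_lb _ _ S f m).
set fstar := inf [set f x | x in S] in hfs *.
have F7 n N : c ^+ 2 * \sum_(i < N) G (n + i)%N ^+ 2 <=
    2 * C * (f (xs n) - f (xs (n + N)%N)).
  elim: N => [|N IH]; first by rewrite big_ord0 mulr0 addn0 subrr mulr0.
  rewrite big_ord_recr /= mulrDr; have := F5 (n + N)%N; rewrite addnS exprMn.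
  lra.
have Hmain K : c * min_upto G K <=
    Num.sqrt (2 * C * (f (xs 0%N) - fstar) / K.+1%:R).
  set mm := min_upto G K.
  have m0 : 0 <= mm by apply: min_upto_ge0.
  have hsum : K.+1%:R * mm ^+ 2 <= \sum_(i < K.+1) G i ^+ 2.
    rewrite mulr_natl -[in X in _ *+ X](card_ord K.+1) -sumr_const.
    apply: ler_sum => i _.
    have := min_upto_le G K i (ltnSE (ltn_ord i)); rewrite -/mm => h.
    rewrite lerXn2r ?nnegrE //; exact: G0.
  have h7 := F7 0%N K.+1; rewrite add0n in h7.
  have hf := hfs _ (Sxs K.+1).
  have cm0 : 0 <= c * mm by rewrite mulr_ge0 // ltW.
  rewrite -(ger0_norm cm0) -sqrtr_sqr ler_sqrt; last first.
    by rewrite divr_ge0 // mulr_ge0 ?subr_ge0 ?hfs // mulr_ge0 // ltW.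
  rewrite ler_pdivlMr // exprMn.
  have : c ^+ 2 * (K.+1%:R * mm ^+ 2) <= c ^+ 2 * \sum_(i < K.+1) G i ^+ 2.
    by rewrite ler_wpM2l // sqr_ge0.
  have : 0 <= C by rewrite ltW.
  nra.
have Hm2 K : min_upto G K <=
    c^-1 * Num.sqrt (2 * C * (f (xs 0%N) - fstar) / K.+1%:R).
  by rewrite -(ler_pM2l c0) mulrA mulfV ?gt_eqF // mul1r; exact: Hmain.
have A0 : 0 <= 2 * C * (f (xs 0%N) - fstar).
  by rewrite mulr_ge0 ?subr_ge0 ?hfs // mulr_ge0 // ltW.
split; first exact: Hm2.
split.
  exists (c^-1 * Num.sqrt (2 * C * (f (xs 0%N) - fstar))) => K K0.
  apply: le_trans (Hm2 K) _.
  rewrite -[X in _ <= X]mulrA; apply: ler_wpM2l; first by rewrite invr_ge0 ltW.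
  have sK : 0 < Num.sqrt (K%:R : R) by rewrite sqrtr_gt0 ltr0n.
  rewrite ler_pdivlMr // -sqrtrM ?divr_ge0 // ler_sqrt //.
  rewrite mulrAC ler_pdivrMr ?ltr0n //.
  apply: ler_wpM2l => //; rewrite ler_nat.
  exact: leqnSn.
have Hex n e : 0 < e -> exists2 k, (n <= k)%N & G k <= e.
  move=> e0; apply: contrapT => hno.
  have hge k : (n <= k)%N -> e < G k.
    move=> nk; rewrite ltNge; apply/negP => h; by apply: hno; exists k.
  set Q := 2 * C * (f (xs n) - fstar).
  set N := (Num.truncn (Q / (c ^+ 2 * e ^+ 2))).+1.
  have hN : Q / (c ^+ 2 * e ^+ 2) < N%:R := truncnS_gt _.
  have h7 := F7 n N.
  have hf := hfs _ (Sxs (n + N)%N).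
  have hsum : N%:R * e ^+ 2 <= \sum_(i < N) G (n + i)%N ^+ 2.
    rewrite mulr_natl -[in X in _ *+ X](card_ord N) -sumr_const.
    apply: ler_sum => i _.
    have := hge (n + i)%N (leq_addr _ _); have := G0 (n + i)%N; nra.
  have ce : 0 < c ^+ 2 * e ^+ 2 by rewrite mulr_gt0 // exprn_gt0.
  rewrite ltr_pdivrMr // in hN.
  have : c ^+ 2 * (N%:R * e ^+ 2) <= c ^+ 2 * \sum_(i < N) G (n + i)%N ^+ 2.
    by rewrite ler_wpM2l // sqr_ge0.
  have : 0 <= C by rewrite ltW.
  rewrite /Q in hN; nra.
rewrite limn_einf_lim.
have -> : einfs (fun k => (G k)%:E) = fun=> 0%E.
  apply: funext => n /=; apply/le_anti/andP; split.
  - apply/lee_addgt0Pr => e e0; rewrite add0e; apply: ge_ereal_inf.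
    have [k kn Gk] := Hex n e e0.
    by exists (G k)%:E; [exists k | rewrite lee_fin].
  - apply: le_ereal_inf_tmp => _ [k _ <-]; rewrite lee_fin; exact: G0.
exact: lim_cst.
Qed.
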